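(* Let $b\ge1$, $0\le r\le b$ and $k$ be integers with $k\ge\frac{15}{2}\ln b+16$. Let $\Omega'$ be a probability distribution on the set of functions $[r]\to[b]$ such that for every $I\subseteq[r]$ with $|I|\le k$ and every $x:I\to[b]$, $\Pr_{\omega\sim\Omega'}\big(\bigwedge_{i\in I}\omega(i)=x(i)\big)=b^{-|I|}$. Let $X'(\omega):=|\omega([r])|$ and $\rho(r):=b(1-(1-b^{-1})^r)$. Then \[ \Pr_{\omega\sim\Omega'}\big(|X'(\omega)-\rho(r)|>9\,b^{-1/2}r\big)\le 2^{-6}. \]
   Context: $[N]:=\{0,\dots,N-1\}$; $\omega([r])$ is the image of $\omega$. *)

(* Defs.v *)
From mathcomp Require Import all_boot all_order all_algebra.
From mathcomp Require Import reals exp.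
Set Implicit Arguments. Unset Strict Implicit. Unset Printing Implicit Defensive.
Import Order.TTheory GRing.Theory Num.Theory.
Local Open Scope ring_scope.

Definition is_distr (R : realType) (r b : nat)
  (P : {ffun 'I_r -> 'I_b} -> R) : Prop :=
  (forall w, 0 <= P w) /\ \sum_w P w = 1.

Definition prob (R : realType) (r b : nat)
  (P : {ffun 'I_r -> 'I_b} -> R) (A : pred {ffun 'I_r -> 'I_b}) : R :=
  \sum_(w | A w) P w.

(* The assignment x : I -> [b] is
   given as a function on [r] of which only the values on I matter. *)
Definition kwise_uniform (R : realType) (r b k : nat)
  (P : {ffun 'I_r -> 'I_b} -> R) : Prop :=
  forall (I : {set 'I_r}) (x : 'I_r -> 'I_b), (#|I| <= k)%N ->
    prob P [pred w : {ffun 'I_r -> 'I_b} | [forall i in I, w i == x i]] = (b%:R ^- #|I|).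

Definition image_size (r b : nat) (w : {ffun 'I_r -> 'I_b}) : nat :=
  #|[set w i | i : 'I_r]|.

Definition rho (R : realType) (b r : nat) : R :=
  b%:R * (1 - (1 - b%:R^-1) ^+ r).

(* Main.v *)
From mathcomp Require Import all_boot all_order all_algebra.
From mathcomp Require Import reals sequences exp ring lra zify.
Require Import Defs.
Import Order.TTheory GRing.Theory Num.Theory.
Set Implicit Arguments. Unset Strict Implicit. Unset Printing Implicit Defensive.
Local Open Scope ring_scope.

Section Alg.
Variable R : realType.

Lemma powdiff_lb (x y : R) n : 0 <= y -> y <= x ->
  n.+1%:R * y ^+ n * (x - y) <= x ^+ n.+1 - y ^+ n.+1.
Proof.
move=> y0 yx; elim: n => [|n IH]; first by rewrite expr0 !expr1 mulr1 mul1r.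
have e : x ^+ n.+2 - y ^+ n.+2 = x * (x ^+ n.+1 - y ^+ n.+1) + y ^+ n.+1 * (x - y).
  by rewrite !exprS; ring.
rewrite e.
set A := n.+1%:R * y ^+ n * (x - y).
have h1 : x * A <= x * (x ^+ n.+1 - y ^+ n.+1).
  by rewrite ler_wpM2l // (le_trans y0 yx).
have h2 : y * A <= x * A.
  by rewrite ler_wpM2r // /A ?mulr_ge0 ?exprn_ge0 ?subr_ge0.
have e2 : n.+2%:R * y ^+ n.+1 * (x - y) = y * A + y ^+ n.+1 * (x - y).
  by rewrite /A exprS -(natr1); ring.
rewrite e2. lra.
Qed.

Lemma powdiff_ub (x y : R) n : 0 <= y -> y <= x -> x <= 1 ->
  x ^+ n - y ^+ n <= n%:R * (x - y).
Proof.
move=> y0 yx x1; elim: n => [|n IH]; first by rewrite !expr0 subrr mul0r.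
have e : x ^+ n.+1 - y ^+ n.+1 = x * (x ^+ n - y ^+ n) + y ^+ n * (x - y).
  by rewrite !exprS; ring.
rewrite e -natr1.
have x0 : 0 <= x by apply: le_trans yx.
have hy : y ^+ n <= 1 by apply: exprn_ile1 => //; apply: le_trans x1.
have h1 : x * (x ^+ n - y ^+ n) <= 1 * (x ^+ n - y ^+ n).
  apply: ler_wpM2r => //. rewrite subr_ge0; exact: lerXn2r.
have h2 : y ^+ n * (x - y) <= 1 * (x - y) by apply: ler_wpM2r; rewrite ?subr_ge0.
lra.
Qed.

End Alg.

Section Alg2.
Variable R : realType.

Lemma f_bound (p : R) n : 0 <= p -> 2 * p <= 1 ->
  p * (1 - p) ^+ n.+1 + (1 - p) * (1 - 2 * p) ^+ n.+1 - ((1 - p) ^+ n.+1) ^+ 2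
  <= n.+1%:R * n%:R * p ^+ 3.
Proof.
move=> p0 p1.
set a := 1 - p. set c := 1 - 2 * p.
have a0 : 0 <= a by rewrite /a; lra.
have c0 : 0 <= c by rewrite /c; lra.
have ca : c <= a by rewrite /a /c; lra.
have a1 : a <= 1 by rewrite /a; lra.
set A := a ^+ n; set C := c ^+ n.
have A0 : 0 <= A by apply: exprn_ge0.
have C0 : 0 <= C by apply: exprn_ge0.
have H1 : 1 - a * A <= n.+1%:R * p.
  have := powdiff_ub n.+1 a0 a1 (lexx 1).
  rewrite expr1n exprS -/A => h. have : 1 - a = p by rewrite /a; ring. move=> e; rewrite e in h. exact: h.
have H2 : n.+1%:R * C * (a ^+ 2 - c) <= (a ^+ 2) ^+ n.+1 - c ^+ n.+1.
  apply: powdiff_lb => //. rewrite /a /c; nra.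
have H3 : A - C <= n%:R * (a - c) by apply: powdiff_ub.
have ea : a ^+ 2 - c = p ^+ 2 by rewrite /a /c; ring.
rewrite ea in H2.
have e1 : (a ^+ 2) ^+ n.+1 = (a * A) ^+ 2 by rewrite /A -exprS -!exprM mulnC.
have e2 : c ^+ n.+1 = c * C by rewrite exprS.
rewrite e1 e2 in H2.
have ac : a - c = p by rewrite /a /c; ring.
rewrite ac in H3.
rewrite !exprS -/A -/C; rewrite -exprS.
have paA : 0 <= p * a * A by rewrite !mulr_ge0.
have K1 : p * a * A * (1 - a * A) <= p * a * A * (n.+1%:R * p) by rewrite ler_wpM2l.
have K2 : (1 - p) * (n.+1%:R * C * p ^+ 2) <= (1 - p) * ((a * A) ^+ 2 - c * C)
  by rewrite ler_wpM2l //; lra.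
have K3 : n.+1%:R * p ^+ 2 * a * (A - C) <= n.+1%:R * p ^+ 2 * a * (n%:R * p)
  by rewrite ler_wpM2l // !mulr_ge0 // exprn_ge0.
have K4 : n.+1%:R * p ^+ 2 * a * (n%:R * p) <= n.+1%:R * p ^+ 2 * 1 * (n%:R * p)
  by rewrite ler_wpM2r ?mulr_ge0 // ler_wpM2l // mulr_ge0 // exprn_ge0.
have E : p * (a * A) + (1 - p) * (c * C) - (a * A) ^+ 2
   = p * a * A * (1 - a * A) - (1 - p) * ((a * A) ^+ 2 - c * C) by ring.
have E2 : p * a * A * (n.+1%:R * p) - (1 - p) * (n.+1%:R * C * p ^+ 2)
   = n.+1%:R * p ^+ 2 * a * (A - C) by rewrite /a; ring.
have E3 : n.+1%:R * p ^+ 2 * 1 * (n%:R * p) = n.+1%:R * n%:R * (p * (p * (p * 1))) by ring.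
rewrite E. lra.
Qed.
End Alg2.

Lemma main_alg (R : realType) (b r : nat) : (1 <= b)%N ->
  b%:R * (1 - (b%:R : R)^-1) ^+ r + b%:R * (b%:R - 1) * (1 - 2 * (b%:R : R)^-1) ^+ r
   - b%:R ^+ 2 * ((1 - (b%:R : R)^-1) ^+ r) ^+ 2
  <= r%:R * (r%:R - 1) / b%:R.
Proof.
move=> b1.
have rr : 0 <= r%:R * (r%:R - 1) / (b%:R : R).
  case: (r) => [|r']; first by rewrite mul0r mul0r.
  by rewrite -natr1 addrK; apply: divr_ge0; rewrite ?ler0n // mulr_ge0 // ?ler0n // addr_ge0 ?ler0n.
case: b b1 rr => [|[|b]] b1 rr //.
  rewrite invr1 subrr !mul1r !mul0r addr0 expr1n mul1r.
  rewrite invr1 mulr1 in rr.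
  case: r rr => [|r] rr; first by rewrite expr0 expr1n subrr !mul0r.
  by rewrite expr0n /= expr0n /= subrr mulr1.
set bR := (b.+2%:R : R).
have bp : 0 < bR by rewrite /bR ltr0n.
set p := bR^-1.
have p0 : 0 <= p by rewrite /p invr_ge0 ltW.
have p1 : 2 * p <= 1.
  rewrite /p ler_pdivrMr // mul1r /bR -addn2 natrD.
  have : 0 <= (b%:R : R) by rewrite ler0n. lra.
have bpp : bR * p = 1 by rewrite /p mulfV // gt_eqF.
case: r {rr} => [|n].
  rewrite !expr0 expr1n !mulr1 mul0r.
  have -> : bR * (bR - 1) = bR ^+ 2 - bR by ring.
  have -> : bR + (bR ^+ 2 - bR) - bR ^+ 2 = 0 by ring. by rewrite mul0r.
have F := f_bound n p0 p1.
have e : bR * (1 - p) ^+ n.+1 + bR * (bR - 1) * (1 - 2 * p) ^+ n.+1 - bR ^+ 2 * ((1 - p) ^+ n.+1) ^+ 2 =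
   bR ^+ 2 * (p * (1 - p) ^+ n.+1 + (1 - p) * (1 - 2 * p) ^+ n.+1 - ((1 - p) ^+ n.+1) ^+ 2).
  rewrite /p; field; apply: lt0r_neq0; have : (0:R) <= b%:R := ler0n _ _; lra.
rewrite e.
have -> : n.+1%:R * (n.+1%:R - 1) / bR = bR ^+ 2 * (n.+1%:R * n%:R * p ^+ 3).
  rewrite /p -natr1 addrK; field; apply: lt0r_neq0; have : (0:R) <= b%:R := ler0n _ _; lra.
by rewrite ler_wpM2l // exprn_ge0 // ltW.
Qed.

Lemma fact_big (R : realType) n : 36 * (30 / 7 : R) ^+ (n + 16) <= (n + 16)`!%:R.
Proof.
elim: n => [|n IH].
  rewrite add0n.
  have -> : (16`!)%:R = (16 * 15 * 14 * 13 * 12 * 11 * 10 * 9 * 8 * 7 * 6 * 5 * 4 * 3 * 2 : R).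
    by rewrite !factS fact0 !natrM /=; ring.
  rewrite !exprS expr0. lra.
rewrite addSn factS natrM exprS.
have h : 30 / 7 <= ((n + 16).+1%:R : R).
  rewrite -addSn natrD; have : (0:R) <= n.+1%:R := ler0n _ _. lra.
have p : 0 <= 36 * (30 / 7 : R) ^+ (n + 16) by apply: mulr_ge0; [lra | apply: exprn_ge0; lra].
have z : (0:R) <= 30 / 7 by lra.
have := ler_pM z p h IH.
have -> : 30 / 7 * (36 * (30 / 7) ^+ (n + 16)) = 36 * (30 / 7 * (30 / 7 : R) ^+ (n + 16)) by ring.
by [].
Qed.

Lemma numeric (R : realType) (b k : nat) : (1 <= b)%N ->
  15 / 2 * ln (b%:R : R) + 16 <= k%:R ->
  36 * (b%:R : R) ^+ 4 * 2 ^+ k <= k`!%:R.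
Proof.
move=> b1 hk.
have b1R : (1 : R) <= b%:R by rewrite ler1n.
have l0 : 0 <= ln (b%:R : R) by apply: ln_ge0.
have k16 : (16 <= k)%N.
  have : (16%:R : R) <= k%:R by lra.
  by rewrite ler_nat.
have eb : (b%:R : R) ^+ 4 = expR (4%:R * ln b%:R).
  rewrite expRM_natl lnK //. rewrite qualifE /=; lra.
have e1 : expR (8 / 15 : R) <= 15 / 7.
  have h1 := expR_ge1Dx (- (8 / 15 : R)).
  have h2 : expR (8 / 15 : R) * expR (- (8 / 15)) = 1 by rewrite -expRD subrr expR0.
  have h3 := expR_gt0 (8 / 15 : R).
  nra.
have eb2 : (b%:R : R) ^+ 4 <= (15 / 7) ^+ k.
  rewrite eb.
  apply: (le_trans (y := expR (k%:R * (8 / 15)))).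
    rewrite ler_expR; lra.
  rewrite expRM_natl; apply: lerXn2r => //; rewrite ?nnegrE ?expR_ge0 //; lra.
rewrite -(subnK k16).
apply: le_trans (fact_big R (k - 16)).
rewrite subnK // -mulrA ler_pM2l; last by lra.
have -> : (30 / 7 : R) = 15 / 7 * 2 by lra.
rewrite exprMn ler_pM2r //; apply: exprn_gt0; lra.
Qed.

Lemma alt_binS (R : realType) n m :
  \sum_(t < m.+1) (-1) ^+ t * ('C(n.+1, t))%:R = (-1) ^+ m * ('C(n, m))%:R :> R.
Proof.
elim: m => [|m IH]; first by rewrite big_ord1 !expr0 !bin0.
rewrite big_ord_recr /= IH binS natrD exprS; ring.
Qed.

Lemma bonf (R : realType) (N m : nat) :
  `|((N == 0)%N)%:R - \sum_(t < m) (-1) ^+ t * ('C(N, t))%:R| <= ('C(N, m))%:R :> R.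
Proof.
case: N => [|n] /=.
  case: m => [|m]; first by rewrite big_ord0 subr0 normr1 bin0.
  rewrite big_ord_recl /= expr0 bin0 mul1r.
  rewrite big1 ?addr0 ?subrr ?normr0 //.
  by move=> i _; rewrite bin0n mulr0.
case: m => [|m]; first by rewrite big_ord0 subrr normr0 ler0n.
rewrite alt_binS sub0r normrN normrM normrX normrN normr1 expr1n mul1r ger0_norm //.
by rewrite ler_nat binS leq_addl.
Qed.

Lemma binom_tail (R : realType) (x e : R) (r m : nat) : 0 <= e ->
  (forall t, (m <= t)%N -> ('C(r, t))%:R * x ^+ t <= e) -> 0 <= x ->
  `|\sum_(t < m) (-1) ^+ t * ('C(r, t))%:R * x ^+ t - (1 - x) ^+ r| <= r.+1%:R * e.
Proof.
move=> e0 he x0.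
pose g t := (-1) ^+ t * ('C(r, t))%:R * x ^+ t.
have eB : (1 - x) ^+ r = \sum_(t < r.+1) g t.
  rewrite exprDn; apply: eq_bigr => t _.
  have e' : forall (y:R) n, y *+ n = n%:R * y by move=> *; rewrite mulr_natl.
  rewrite expr1n mul1r /g e' (exprNn x); ring.
rewrite eB.
pose N := (m + r.+1)%N.
rewrite (big_ord_widen N g (leq_addr _ _)) (big_ord_widen N g (leq_addl _ _)).
rewrite [X in _ - X](bigID (fun t : 'I_N => (t < m)%N)) /=.
have -> : \sum_(i < N | (i < r.+1)%N && (i < m)%N) g i = \sum_(i < N | (i < m)%N) g i.
  rewrite [RHS](bigID (fun t : 'I_N => (t < r.+1)%N)) /=.
  rewrite [X in _ = _ + X]big1 ?addr0; last first.
    move=> i /andP [_]; rewrite -leqNgt => ri; by rewrite /g bin_small // mulr0 mul0r.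
  by apply: eq_bigl => i; rewrite andbC.
rewrite opprD addrA subrr add0r normrN.
apply: (le_trans (ler_norm_sum _ _ _)).
apply: (le_trans (y := \sum_(i < N | (i < r.+1)%N) e)).
  rewrite [X in _ <= X]big_mkcond [X in X <= _]big_mkcond /=.
  apply: ler_sum => i _.
  case: ifP => [/andP [ir im] | _]; last by case: ifP.
  rewrite ir /g normrM normrM normrX normrN normr1 expr1n mul1r ger0_norm // ger0_norm ?exprn_ge0 //.
  by apply: he; rewrite leqNgt.
rewrite -(big_ord_widen N (fun _ => e) (leq_addl _ _)) sumr_const card_ord.
by rewrite mulr_natl.
Qed.
Lemma pow2fact k t : (1 <= k)%N -> (k <= t)%N -> (2 ^ t * k`! <= 2 ^ k * t`!)%N.
Proof.
move=> k1; elim: t => [|t IH]; first by rewrite leqn0 => /eqP k0; rewrite k0 in k1.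
rewrite leq_eqVlt => /orP [/eqP <- //|]; rewrite ltnS => kt.
have h := IH kt.
rewrite expnS factS.
set A := (2 ^ t)%N. set B := k`!. set C := (2 ^ k)%N. set D := t`!.
nia.
Qed.

Lemma ffact_leX n m : (n ^_ m <= n ^ m)%N.
Proof.
rewrite ffact_prod (leq_trans (leq_prod (E2 := fun _ => n) _)) // ?prod_nat_const ?card_ord // => i _; exact: leq_subr.
Qed.

Lemma term_nat r b k t s : (r <= b)%N -> (s <= 2)%N -> (1 <= k)%N -> (k <= t)%N ->
  ('C(r, t) * s ^ t * k`! <= 2 ^ k * b ^ t)%N.
Proof.
move=> rb s2 k1 kt.
rewrite -(@leq_pmul2r t`!) ?fact_gt0 //.
have h1 : ('C(r, t) * t`! <= b ^ t)%N.
  by rewrite bin_ffact (leq_trans (ffact_leX _ _)) // leq_exp2r // (leq_trans k1 kt).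
have h2 : (s ^ t <= 2 ^ t)%N by rewrite leq_exp2r // (leq_trans k1 kt).
have h3 := pow2fact k1 kt.
set C := 'C(r, t) in h1 *. set F := t`! in h1 h3 *. set S := (s ^ t)%N in h2 *.
set K := k`! in h3 *. set Bt := (b ^ t)%N in h1 *. set T2 := (2 ^ t)%N in h2 h3 *. set K2 := (2 ^ k)%N in h3 *.
have -> : (C * S * K * F = (C * F) * (S * K))%N by ring.
apply: (leq_trans (leq_mul h1 (leqnn _))).
have -> : (K2 * Bt * F = Bt * (K2 * F))%N by ring.
rewrite leq_mul2l; apply/orP; right.
apply: leq_trans h3; by rewrite leq_mul2r h2 orbT.
Qed.

Lemma term_bound (R : realType) r b k t s : (1 <= b)%N -> (r <= b)%N -> (s <= 2)%N ->
  (1 <= k)%N -> (k <= t)%N ->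
  ('C(r, t))%:R * ((s%:R : R) / b%:R) ^+ t <= (2 ^ k)%:R / (k`!)%:R.
Proof.
move=> b1 rb s2 k1 kt.
have h := term_nat rb s2 k1 kt.
have bt : (0 : R) < (b ^ t)%:R by rewrite ltr0n expn_gt0 b1.
have kf : (0 : R) < (k`!)%:R by rewrite ltr0n fact_gt0.
rewrite expr_div_n mulrA ler_pdivrMr -?natrX // mulrAC ler_pdivlMr //.
by rewrite -!natrM ler_nat.
Qed.
Section Prob.
Variables (R : realType) (r b k : nat) (P : {ffun 'I_r -> 'I_b} -> R).
Hypothesis HP : is_distr P.
Hypothesis Hk : kwise_uniform k P.
Local Notation T := {ffun 'I_r -> 'I_b}.

Lemma L1 (y0 : 'I_b) (J : {set 'I_r}) (S : {set 'I_b}) : (#|J| <= k)%N ->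
  prob P [pred w : T | [forall i in J, w i \in S]] = (#|S|%:R / b%:R) ^+ #|J|.
Proof.
move=> Jk.
pose F := pffun_on y0 J S.
have step : forall w : T, \sum_(x in F | [forall i in J, w i == x i]) P w
   = if [forall i in J, w i \in S] then P w else 0.
  move=> w; case: ifP => hw.
    pose x0 : T := [ffun i => if i \in J then w i else y0].
    rewrite (big_pred1 x0) // => x /=.
    apply/andP/eqP => [[/pffun_onP [hs _] /forallP ha] | ->].
      apply/ffunP => i; rewrite ffunE; case: ifP => iJ.
        by have := ha i; rewrite iJ => /eqP.
      apply/eqP; apply/negPn/negP => ne; have := subsetP hs i; rewrite inE ne iJ; by move=> /(_ isT).
    split.
      apply/pffun_onP; split.
        by apply/subsetP => i; rewrite inE ffunE; case: ifP => //; rewrite eqxx.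
      move=> _ /imageP [i iJ ->]; rewrite ffunE iJ.
      by move/forallP: hw => /(_ i); rewrite iJ.
    by apply/forallP => i; apply/implyP => iJ; rewrite ffunE iJ.
  rewrite big_pred0 // => x; apply/negbTE/negP => /andP [/pffun_onP [_ hs] /forallP ha].
  move/negbT: hw => /negP; apply; apply/forallP => i; apply/implyP => iJ.
  have := ha i; rewrite iJ => /eqP ->; apply: hs; exact: image_f.
have : \sum_(x in F) prob P [pred w : T | [forall i in J, w i == x i]]
    = prob P [pred w : T | [forall i in J, w i \in S]].
  rewrite /prob.
  rewrite (exchange_big_dep xpredT) //=.
  rewrite [RHS]big_mkcond; apply: eq_bigr => w _; exact: step.
move <-.
under eq_bigr => x _ do rewrite Hk //.
rewrite sumr_const card_pffun_on.
have e : forall (x : R) n, x *+ n = n%:R * x by move=> x n; rewrite mulr_natl.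
rewrite e natrX exprMn exprVn mulrC.
by [].
Qed.

Definition cnt (S : {set 'I_b}) (w : T) : nat := #|[set i | w i \in S]|.
Definition Ex (f : T -> R) : R := \sum_w P w * f w.

Lemma L2 (y0 : 'I_b) (S : {set 'I_b}) t : (t <= k)%N ->
  Ex (fun w => ('C(cnt S w, t))%:R) = 'C(r, t)%:R * (#|S|%:R / b%:R) ^+ t.
Proof.
move=> tk.
have e1 : forall w : T, ('C(cnt S w, t))%:R =
   \sum_(J : {set 'I_r} | #|J| == t) (if [forall i in J, w i \in S] then 1 else 0 : R).
  move=> w; rewrite /cnt -cards_draws -sum1_card natr_sum -big_mkcondr /=.
  apply: eq_bigl => J; rewrite !inE andbC; congr (_ && _).
  apply/subsetP/forallP => [h i | h i iJ]; first by apply/implyP => /h; rewrite inE.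
  by rewrite inE; move/implyP: (h i); apply.
rewrite /Ex.
under eq_bigr => w _ do rewrite e1 mulr_sumr.
rewrite exchange_big /=.
have e2 : forall J : {set 'I_r}, #|J| == t ->
   \sum_w P w * (if [forall i in J, w i \in S] then 1 else 0) = (#|S|%:R / b%:R) ^+ t.
  move=> J /eqP Jt; rewrite -Jt -L1 ?Jt // /prob [RHS]big_mkcond /=.
  by apply: eq_bigr => w _; case: ifP; rewrite ?mulr1 ?mulr0.
rewrite (eq_bigr _ e2) sumr_const.
have -> : #|[pred J : {set 'I_r} | #|J| == t]| = 'C(r, t).
  by rewrite -[in RHS](card_ord r) -card_draws; apply: eq_card => J; rewrite !inE.
have e : forall (x : R) n, x *+ n = n%:R * x by move=> x n; rewrite mulr_natl.
by rewrite e.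
Qed.

Definition Zf (S : {set 'I_b}) (w : T) : R := ((cnt S w == 0)%N)%:R.

Lemma Ex_lin (f g : T -> R) (c : R) : Ex (fun w => f w - c * g w) = Ex f - c * Ex g.
Proof.
rewrite /Ex mulr_sumr -sumrB; apply: eq_bigr => w _; ring.
Qed.

Lemma L3 (y0 : 'I_b) (S : {set 'I_b}) : (#|S| <= 2)%N -> (1 <= b)%N -> (r <= b)%N -> (1 <= k)%N ->
  `|Ex (Zf S) - (1 - #|S|%:R / b%:R) ^+ r| <= r.+2%:R * ((2 ^ k)%:R / (k`!)%:R).
Proof.
move=> S2 b1 rb k1.
set x := (#|S|%:R / b%:R : R). set eps := ((2 ^ k)%:R / (k`!)%:R : R).
have e0 : 0 <= eps by rewrite /eps divr_ge0.
have x0 : 0 <= x by rewrite /x divr_ge0.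
have tb : forall t, (k <= t)%N -> ('C(r, t))%:R * x ^+ t <= eps.
  by move=> t kt; apply: term_bound.
set A := \sum_(t < k) (-1) ^+ t * ('C(r, t))%:R * x ^+ t.
have hb := binom_tail e0 tb x0.
have ha : `|Ex (Zf S) - A| <= eps.
  have eA : A = Ex (fun w => \sum_(t < k) (-1) ^+ t * ('C(cnt S w, t))%:R).
    rewrite /A /Ex.
    under [RHS]eq_bigr => w _ do rewrite mulr_sumr.
    rewrite exchange_big /=; apply: eq_bigr => t _.
    rewrite -mulrA -(L2 y0 S (ltnW (ltn_ord t))) /Ex mulr_sumr.
    by apply: eq_bigr => w _; ring.
  rewrite eA.
  have -> : Ex (Zf S) - Ex (fun w => \sum_(t < k) (-1) ^+ t * ('C(cnt S w, t))%:R)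
     = Ex (fun w => Zf S w - 1 * \sum_(t < k) (-1) ^+ t * ('C(cnt S w, t))%:R).
    by rewrite Ex_lin mul1r.
  apply: (le_trans (ler_norm_sum _ _ _)).
  apply: (le_trans (y := Ex (fun w => ('C(cnt S w, k))%:R))).
    apply: ler_sum => w _; rewrite normrM ger0_norm; last by case: HP.
    apply: ler_wpM2l; first by case: HP.
    by rewrite mul1r /Zf; apply: bonf.
  by rewrite (L2 y0 S (leqnn k)); apply: tb.
have -> : Ex (Zf S) - (1 - x) ^+ r = (Ex (Zf S) - A) + (A - (1 - x) ^+ r) by ring.
apply: (le_trans (ler_normD _ _)).
have -> : r.+2%:R * eps = eps + r.+1%:R * eps by rewrite -[r.+2]addn1 natrD; ring.
exact: lerD.
Qed.

Lemma cnt1 (w : T) y : (cnt [set y] w == 0)%N = (y \notin [set w i | i : 'I_r]).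
Proof.
rewrite /cnt cards_eq0; apply/idP/idP => [/eqP h | h].
  apply/imsetP => [[i _ ey]].
  have : i \in [set i0 | w i0 \in [set y]] by rewrite inE ey inE.
  by rewrite h inE.
apply/eqP/setP => i; rewrite !inE; apply/negbTE/eqP => ey.
by move/imsetP: h; apply; exists i; rewrite ?ey.
Qed.

Lemma img_W (w : T) : ((image_size w)%:R : R) = b%:R - \sum_y Zf [set y] w.
Proof.
have e : \sum_y Zf [set y] w = (#|~: [set w i | i : 'I_r]|)%:R.
  rewrite -sum1_card natr_sum [RHS]big_mkcond /=; apply: eq_bigr => y _.
  by rewrite /Zf cnt1 !inE; case: ifP.
rewrite e /image_size.
have h := cardsC [set w i | i : 'I_r]; rewrite card_ord in h.
have hR : ((#|[set w i | i : 'I_r]|)%:R + (#|~: [set w i | i : 'I_r]|)%:R : R) = b%:R by rewrite -natrD h.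
by rewrite -hR addrK.
Qed.

Lemma Ex_const c : Ex (fun _ => c) = c.
Proof. by rewrite /Ex -mulr_suml; case: HP => _ ->; rewrite mul1r. Qed.

Lemma Ex_sum (I : finType) (F : I -> T -> R) :
  Ex (fun w => \sum_i F i w) = \sum_i Ex (F i).
Proof.
rewrite /Ex; under eq_bigr => w _ do rewrite mulr_sumr.
by rewrite exchange_big.
Qed.

Lemma Zf_mul y y' w : Zf [set y] w * Zf [set y'] w = Zf [set y; y'] w.
Proof.
rewrite /Zf /cnt !cards_eq0.
have -> : [set i | w i \in [set y; y']] = [set i | w i \in [set y]] :|: [set i | w i \in [set y']].
  by apply/setP => i; rewrite !inE.
rewrite setU_eq0.
by case: ([set i | w i \in [set y]] == set0); case: ([set i | w i \in [set y']] == set0);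
  rewrite /= ?mulr1 ?mulr0 ?mul0r.
Qed.

Lemma sq_expand (W : T -> R) c :
  Ex (fun w => (W w - c) ^+ 2) = Ex (fun w => W w ^+ 2) - 2 * c * Ex W + c ^+ 2.
Proof.
have := Ex_const (c ^+ 2); rewrite /Ex => ec.
rewrite -[X in _ = _ + X]ec mulr_sumr -sumrB -big_split /=.
by apply: eq_bigr => w _; ring.
Qed.

Lemma final_bound (y0 : 'I_b) : (1 <= b)%N -> (r <= b)%N -> (1 <= k)%N ->
  Ex (fun w => ((image_size w)%:R - rho R b r) ^+ 2)
  <= r%:R * (r%:R - 1) / b%:R + 3 * b%:R ^+ 2 * (r.+2%:R * ((2 ^ k)%:R / (k`!)%:R)).
Proof.
move=> b1 rb k1.
set d := r.+2%:R * ((2 ^ k)%:R / (k`!)%:R : R).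
set bR := (b%:R : R).
set q1 := (1 - bR^-1) ^+ r. set q2 := (1 - 2 * bR^-1) ^+ r.
have bp : 0 < bR by rewrite /bR ltr0n.
have d0 : 0 <= d by rewrite /d mulr_ge0 // divr_ge0.
have q10 : 0 <= q1.
  rewrite /q1 exprn_ge0 // subr_ge0 invf_le1 // /bR ler1n //.
have q11 : q1 <= 1.
  rewrite /q1 exprn_ile1 // ?subr_ge0 ?invf_le1 // ?/bR ?ler1n //.
  rewrite gerBl invr_ge0; exact: ltW.
pose W w := \sum_y Zf [set y] w.
have eY : forall w, (image_size w)%:R - rho R b r = - (W w - bR * q1).
  move=> w; rewrite img_W /rho /W -/bR -/q1; ring.
have -> : Ex (fun w => ((image_size w)%:R - rho R b r) ^+ 2) = Ex (fun w => (W w - bR * q1) ^+ 2).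
  by rewrite /Ex; apply: eq_bigr => w _; rewrite eY sqrrN.
rewrite sq_expand.
have Z1 : forall y : 'I_b, `|Ex (Zf [set y]) - q1| <= d.
  move=> y; have := @L3 y0 [set y] _ b1 rb k1; rewrite cards1 /d /q1 div1r; apply => //.
have Z2 : forall y y' : 'I_b, y' != y -> Ex (Zf [set y; y']) <= q2 + d.
  move=> y y' ne; have := @L3 y0 [set y; y'] _ b1 rb k1; rewrite cards2 eq_sym ne /=.
  rewrite /q2 mulrC => /(_ isT); rewrite -/d => h.
  have := ler_norm (Ex (Zf [set y; y']) - (1 - bR^-1 * 2) ^+ r); rewrite /bR; lra.
have emn : forall (x : R) n, x *+ n = n%:R * x by move=> x n; rewrite mulr_natl.
have EW1 : bR * (q1 - d) <= Ex W.
  have h : forall y, q1 - d <= Ex (Zf [set y]).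
    by move=> y; have := Z1 y; rewrite ler_norml => /andP [h1 h2]; lra.
  rewrite /W Ex_sum; apply: le_trans (ler_sum _ (fun y _ => h y)).
  by rewrite sumr_const card_ord emn.
have EW2 : Ex (fun w => W w ^+ 2) <= bR * (q1 + d) + bR * (bR - 1) * (q2 + d).
  have eW : forall w, W w ^+ 2 = \sum_y \sum_y' Zf [set y; y'] w.
    move=> w; rewrite expr2 /W mulr_suml; apply: eq_bigr => y _.
    by rewrite mulr_sumr; apply: eq_bigr => y' _; rewrite Zf_mul.
  have -> : Ex (fun w => W w ^+ 2) = \sum_y \sum_y' Ex (Zf [set y; y']).
    rewrite /Ex; under eq_bigr do rewrite eW.
    rewrite -/(Ex (fun w => \sum_y \sum_y' Zf [set y; y'] w)) Ex_sum.
    by apply: eq_bigr => y _; rewrite Ex_sum.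
  have h : forall y : 'I_b, \sum_y' Ex (Zf [set y; y']) <= (q1 + d) + (bR - 1) * (q2 + d).
    move=> y; rewrite (bigD1 y) //= setUid.
    apply: lerD; first by have := Z1 y; rewrite ler_norml => /andP [h1 h2]; lra.
    apply: (le_trans (y := \sum_(i < b | i != y) (q2 + d))); first by apply: ler_sum => y' ne; apply: Z2.
    rewrite sumr_const emn.
    have -> : #|[pred i : 'I_b | i != y]| = b.-1 by rewrite cardC1 card_ord.
    rewrite -(prednK b1) /bR -(prednK b1) -natr1 addrK //.
  apply: le_trans (ler_sum _ (fun y _ => h y)) _.
  rewrite sumr_const card_ord emn -/bR; lra.
have MA := main_alg R r b1; rewrite -/bR -/q1 -/q2 in MA.
have K : 2 * (bR * q1) * (bR * (q1 - d)) <= 2 * (bR * q1) * Ex W.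
  by rewrite ler_wpM2l // mulr_ge0 // mulr_ge0 // ltW.
have K2 : bR ^+ 2 * q1 * d <= bR ^+ 2 * 1 * d.
  by rewrite ler_wpM2r // ler_wpM2l // exprn_ge0 // ltW.
lra.
Qed.
End Prob.

Lemma markov_sq (R : realType) (r b : nat) (P : {ffun 'I_r -> 'I_b} -> R) (Y : {ffun 'I_r -> 'I_b} -> R) (t : R) :
  is_distr P -> 0 < t ->
  prob P [pred w | t < `|Y w|] <= (\sum_w P w * Y w ^+ 2) / t ^+ 2.
Proof.
move=> [P0 _] t0.
rewrite /prob mulr_suml.
apply: (le_trans (y := \sum_(w | t < `|Y w|) (P w * Y w ^+ 2 / t ^+ 2))).
  apply: ler_sum => w /= h.
  rewrite -mulrA -[X in X <= _]mulr1 ler_wpM2l // ler_pdivlMr ?exprn_gt0 // mul1r.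
  rewrite -(real_normK (num_real (Y w))) !expr2.
  exact: ler_pM (ltW t0) (ltW t0) (ltW h) (ltW h).
rewrite [X in X <= _]big_mkcond /=; apply: ler_sum => w _; case: ifP => // _.
apply: divr_ge0; [apply: mulr_ge0; [exact: P0 | exact: sqr_ge0] | exact: sqr_ge0].
Qed.

Theorem lemma20 (R : realType) (b r k : nat)
  (P : {ffun 'I_r -> 'I_b} -> R) :
  (1 <= b)%N -> (r <= b)%N ->
  (15 / 2 * ln (b%:R : R) + 16 <= k%:R) ->
  is_distr P -> kwise_uniform k P ->
  prob P [pred w : {ffun 'I_r -> 'I_b} | 9 * (Num.sqrt (b%:R : R))^-1 * r%:R
                   < `|(image_size w)%:R - rho R b r| ]
  <= 2 ^- 6.
Proof.
move=> b1 rb hk HP Hk.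
have l0 : 0 <= ln (b%:R : R) by apply: ln_ge0; rewrite ler1n.
have k1 : (1 <= k)%N.
  have : (1 : R) <= k%:R by lra.
  by rewrite ler1n.
case: r rb P HP Hk => [|r'] rb P HP Hk.
  rewrite /prob big_pred0 ?invr_ge0 ?exprn_ge0 // => w /=.
  rewrite mulr0 /rho expr0 subrr mulr0 subr0 /image_size.
  have -> : [set w i | i : 'I_0] = set0.
    by apply/setP => y; rewrite inE; apply/imsetP => [[[i hi]]].
  by rewrite cards0 normr0 ltxx.
set r := r'.+1.
have y0 : 'I_b := Ordinal b1.
have FB := final_bound HP Hk y0 b1 rb k1.
have NU := numeric b1 hk.
set bR := (b%:R : R) in FB NU *.
set eps := ((2 ^ k)%:R / (k`!)%:R : R) in FB.
set t := 9 * (Num.sqrt bR)^-1 * r%:R.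
have bp : 0 < bR by rewrite /bR ltr0n.
have rp : (1 : R) <= r%:R by rewrite ler1n.
have t0 : 0 < t by rewrite /t !mulr_gt0 // ?invr_gt0 ?sqrtr_gt0 //; lra.
have t2 : t ^+ 2 = 81 * r%:R ^+ 2 / bR.
  rewrite /t !exprMn exprVn sqr_sqrtr ?ltW //; rewrite /bR; ring.
apply: le_trans (markov_sq _ HP t0) _.
rewrite ler_pdivrMr ?exprn_gt0 // t2.
apply: (le_trans FB).
have kf : (0 : R) < (k`!)%:R by rewrite ltr0n fact_gt0.
have hE : 36 * bR ^+ 4 * eps <= 1.
  by rewrite /eps mulrA ler_pdivrMr // mul1r natrX.
set u := bR ^+ 3 * eps.
have e0 : 0 <= eps by rewrite /eps divr_ge0.
have u0 : 0 <= u by rewrite /u mulr_ge0 // exprn_ge0 // ltW.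
have hu : 36 * u <= 1.
  have : 36 * u * 1 <= 36 * u * bR by apply: ler_wpM2l; [apply: mulr_ge0; lra | by rewrite /bR ler1n].
  have -> : 36 * u * bR = 36 * bR ^+ 4 * eps by rewrite /u; ring.
  lra.
set rr := r%:R.
have -> : r'.+3%:R = rr + 2 by rewrite /rr /r -addn2 natrD.
have e1 : rr * (rr - 1) / bR + 3 * bR ^+ 2 * ((rr + 2) * eps)
   = (rr * (rr - 1) + 3 * (rr + 2) * u) / bR.
  by rewrite /u; field; rewrite gt_eqF.
have e2 : 2 ^- 6 * (81 * rr ^+ 2 / bR) = (81 / 64 * rr ^+ 2) / bR.
  by field; rewrite gt_eqF.
rewrite /rr in e1 e2; rewrite e1 e2 ler_pM2r ?invr_gt0 //.
have K : (rr + 2) * (36 * u) <= (rr + 2) * 1 by rewrite ler_wpM2l //; lra.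
rewrite -/rr. nra.
Qed.
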